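(* Let $n\ge 3$ and let $\mathcal{B}$ be the set of bases of any rank-$3$ matroid on the ground set $\mathbb{Z}_n$ invariant under the translation action of $\mathbb{Z}_n$ (equivalently, corresponding to a three-dimensional tropical subrepresentation of $\mathbb{B}[\mathbb{Z}_n]$). Then for every unit $u\in\mathbb{Z}_n^\times$, $f_{u,2u}=\{\{a,a+u,a+2u\}\mid a\in\mathbb{Z}_n\}\subseteq\mathcal{B}$.
   Context: $\mathbb{Z}_n$ acts on $\binom{\mathbb{Z}_n}{3}$ by $x\cdot\{a,b,c\}=\{x+a,x+b,x+c\}$. For $i,j\in\mathbb{Z}_n$ with $0,i,j$ pairwise distinct, $f_{i,j}=\{\{a,a+i,a+j\}\mid a\in\mathbb{Z}_n\}$. $\mathbb{Z}_n^\times$ denotes the units of $\mathbb{Z}_n$. *)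

(* Defs.v *)
From mathcomp Require Import all_boot all_algebra.
Set Implicit Arguments. Unset Strict Implicit. Unset Printing Implicit Defensive.
Import GRing.Theory.
Local Open Scope ring_scope.

Definition is_matroid_bases (T : finType) (B : {set {set T}}) : Prop :=
  B != set0 /\
  forall X Y, X \in B -> Y \in B -> forall x, x \in X :\: Y ->
    exists2 y, y \in Y :\: X & (X :\ x) :|: [set y] \in B.

Definition is_rank_matroid_bases (T : finType) (r : nat) (B : {set {set T}}) : Prop :=
  is_matroid_bases B /\ forall X, X \in B -> #|X| = r.

Definition translate (n : nat) (x : 'Z_n) (A : {set 'Z_n}) : {set 'Z_n} :=
  [set x + a | a in A].

Definition translation_invariant (n : nat) (B : {set {set 'Z_n}}) : Prop :=
  forall (x : 'Z_n) (X : {set 'Z_n}), X \in B -> translate x X \in B.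

Definition f_orbit (n : nat) (i j : 'Z_n) : {set {set 'Z_n}} :=
  [set [set a; a + i; a + j] | a : 'Z_n].

(* Main.v *)
Require Import Defs.
From mathcomp Require Import all_boot all_algebra.
Import GRing.Theory.
Local Open Scope ring_scope.
Set Implicit Arguments. Unset Strict Implicit.

Lemma card3 (T : finType) (a b c : T) :
  #|[set a; b; c]| = 3%N -> [/\ a != b, a != c & b != c].
Proof.
have -> : [set a; b; c] = c |: [set a; b].
  by apply/setP => x; rewrite !inE orbC.
rewrite cardsU1 cards2 !inE.
by rewrite ![c == _]eq_sym; case: (a == b); case: (a == c); case: (b == c).
Qed.

Section Proof.
Variable n : nat.
Hypothesis Hn : (3 <= n)%N.
Variable B : {set {set 'Z_n}}.
Hypothesis HB : is_rank_matroid_bases 3 B.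
Hypothesis Hinv : translation_invariant B.

Lemma card_B X : X \in B -> #|X| = 3%N.
Proof. exact: HB.2. Qed.

Lemma third X x z : X \in B -> x \in X -> z \in X -> x != z ->
  exists c, X = [set x; z; c].
Proof.
move=> XB xX zX xz.
have : #|X :\: [set x; z]| == 1%N.
  rewrite cardsD (setIidPr _) ?cards2 ?xz ?card_B //.
  by apply/subsetP => y; rewrite !inE => /orP[]/eqP->.
case/cards1P => c Hc; exists c; apply/setP => y.
move/setP: Hc => /(_ y); rewrite !inE.
case: (eqVneq y x) => [->|yx]; first by rewrite xX.
case: (eqVneq y z) => [->|yz]; first by rewrite zX.
by rewrite /= => ->.
Qed.

Lemma lemma1 p q Z X : X \in B -> Z \in B -> p \in X -> q \in X -> p != q ->
  exists2 z, z \in Z & [set p; q; z] \in B.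
Proof.
move=> XB ZB pX qX pq.
have [c Xe] := third XB pX qX pq.
have [_ pc qc] : [/\ p != q, p != c & q != c] by move: (card_B XB); rewrite Xe => /card3.
case: (boolP (c \in Z)) => cZ; first by exists c => //; rewrite -Xe.
have := HB.1.2 X Z XB ZB c.
rewrite inE cZ Xe !inE eqxx !orbT => /(_ isT) [y].
rewrite inE => /andP [_ yZ] H; exists y => //.
suff <- : ([set p; q; c] :\ c) :|: [set y] = [set p; q; y] by [].
apply/setP => w; rewrite !inE.
case: (eqVneq w c) => [->|wc] /=; last by rewrite orbF.
by rewrite !(eq_sym c) (negbTE pc) (negbTE qc).
Qed.

Lemma transl3 x p q r : [set p; q; r] \in B -> [set x + p; x + q; x + r] \in B.
Proof. by move/(Hinv x); rewrite /translate !imsetU !imset_set1. Qed.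

Definition cov a b := [exists X, (X \in B) && (a \in X) && (b \in X)].

Lemma covP a b : reflect (exists2 X, X \in B & (a \in X) && (b \in X)) (cov a b).
Proof.
apply: (iffP existsP) => [[X /andP[/andP[XB aX] bX]]|[X XB /andP[aX bX]]].
  by exists X => //; rewrite aX.
by exists X; rewrite XB aX.
Qed.

Lemma cov_tr x a b : cov a b -> cov (x + a) (x + b).
Proof.
move/covP => [X XB /andP[aX bX]]; apply/covP; exists (translate x X).
  exact: Hinv.
by rewrite /translate !imset_f.
Qed.

Lemma exB : exists2 X, X \in B & (0 < #|X|)%N.
Proof.
have /set0Pn [X XB] := HB.1.1.
by exists X => //; rewrite card_B.
Qed.

Lemma cov_el x : cov x x.
Proof.
have [X XB /card_gt0P [e eX]] := exB.
have := @cov_tr (x - e) e e; rewrite subrK; apply.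
by apply/covP; exists X => //; rewrite eX.
Qed.

Lemma covC a b : cov a b -> cov b a.
Proof. by move/covP => [X XB /andP[aX bX]]; apply/covP; exists X; rewrite // aX bX. Qed.

Lemma trans x y z : ~~ cov x y -> ~~ cov y z -> x != z -> ~~ cov x z.
Proof.
move=> nxy nyz xz; apply/negP => /covP [X XB /andP[xX zX]].
have [c Xe] := third XB xX zX xz.
have [_ xc zc] : [/\ x != z, x != c & z != c] by move: (card_B XB); rewrite Xe => /card3.
case: (eqVneq y c) => [yc|yc].
  by move/negP: nxy; apply; apply/covP; exists X; rewrite // xX Xe yc !inE eqxx !orbT.
have /covP [Y YB /andP [yY _]] := cov_el y.
have : (0 < #|Y :\ y|)%N.
  by have := card_B YB; rewrite (cardsD1 y) yY add1n => [[->]].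
case/card_gt0P => s; rewrite !inE => /andP[sy sY].
have [w wX W1] := lemma1 YB XB yY sY ltac:(by rewrite eq_sym).
have Hcov : forall W t, W \in B -> y \in W -> t \in W -> t \in [set x; z] -> False.
  move=> W t WB yW tW; rewrite !inE => /orP[]/eqP Ht; subst t.
    by move/negP: nxy; apply; apply/covP; exists W; rewrite // yW tW.
  by move/negP: nyz; apply; apply/covP; exists W; rewrite // yW tW.
move: (wX); rewrite Xe !inE -orbA => /or3P [/eqP wx|/eqP wz|/eqP wc].
- by apply: (Hcov _ x W1); rewrite ?inE -?wx ?eqxx ?orbT.
- by apply: (Hcov _ z W1); rewrite ?inE -?wz ?eqxx ?orbT.
have cW1 : c \in [set y; s; w] by rewrite wc !inE eqxx !orbT.
have yW1 : y \in [set y; s; w] by rewrite !inE eqxx.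
have [w' w'X W2] := lemma1 W1 XB yW1 cW1 yc.
have [_ _ cw'] := card3 (card_B W2).
move: w'X; rewrite Xe !inE -orbA => /or3P [/eqP wx|/eqP wz|/eqP wc'].
- by apply: (Hcov _ x W2); rewrite ?inE -?wx ?eqxx ?orbT.
- by apply: (Hcov _ z W2); rewrite ?inE -?wz ?eqxx ?orbT.
by rewrite wc' eqxx in cw'.
Qed.

Variable u : 'Z_n.
Hypothesis Hu : u \is a GRing.unit.

Lemma n1 : (1 < n)%N. Proof. exact: leq_trans Hn. Qed.

Lemma u0 : u != 0.
Proof. by apply: contraTneq Hu => ->; rewrite unitr0. Qed.

Lemma natr_neq0 k : (0 < k < n)%N -> (k%:R : 'Z_n) != 0.
Proof.
move=> /andP[k0 kn]; apply/eqP => /(congr1 val).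
by rewrite /= val_Zp_nat ?n1 // modn_small // => H; rewrite H in k0.
Qed.

Lemma mulu_neq0 k : (0 < k < n)%N -> k%:R * u != 0.
Proof.
move=> H; apply: contraNneq (natr_neq0 H) => H0.
by rewrite -(mulrK Hu (k%:R)) H0 mul0r.
Qed.

Lemma every x : exists2 k, (k < n)%N & x = k%:R * u.
Proof.
exists (val (x * u^-1)).
  by apply: leq_trans (ltn_ord (x * u^-1)) _; rewrite Zp_cast ?n1.
by rewrite natr_Zp mulrVK.
Qed.

Lemma succ k : k.+1%:R * u = k%:R * u + u.
Proof. by rewrite mulrSr mulrDl mul1r. Qed.

Lemma par_free : cov 0 u.
Proof.
case: (boolP (cov 0 u)) => // H; exfalso.
have Ha : forall a, ~~ cov a (a + u).
  move=> a; apply/negP => /(cov_tr (- a)); rewrite addNr addKr.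
  by move/negP: H.
have Hk : forall k, (0 < k < n)%N -> ~~ cov 0 (k%:R * u).
  elim => // k IH /andP[_ kn].
  case: k IH kn => [_ _|k IH kn]; first by rewrite ?mulr1n mul1r.
  apply: (@trans _ (k.+1%:R * u)).
  - by apply: IH; apply: ltnW.
  - by rewrite [k.+2%:R * u]succ; apply: Ha.
  - by rewrite eq_sym mulu_neq0 // kn.
have [X XB X0] := exB.
case/card_gt0P: X0 => p pX.
have : (0 < #|X :\ p|)%N.
  by have := card_B XB; rewrite (cardsD1 p) pX add1n => [[->]].
case/card_gt0P => q; rewrite !inE => /andP[qp qX].
have [k kn Hqp] := every (q - p).
have : cov (- p + p) (- p + q) by apply: cov_tr; apply/covP; exists X; rewrite // pX qX.
rewrite addNr addrC Hqp; apply/negP; apply: Hk; rewrite kn andbT lt0n.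
apply: contra qp => /eqP k0; move: Hqp; rewrite k0 mulr0n mul0r => /eqP.
by rewrite subr_eq0.
Qed.

Lemma main_core : (forall b, [set b; b + u; b + 2%:R * u] \notin B) -> False.
Proof.
move=> H.
have notB : forall a, [set 0; u; a] \in B -> a = 0 \/ a = u -> False.
  by move=> a /card_B /card3 [_ H1 H2] [] Ha; move: H1 H2; rewrite Ha !eqxx.
have P : forall k, [set 0; u; k%:R * u] \notin B /\ [set 0; u; k.+1%:R * u] \notin B.
  elim => [|k [IH1 IH2]].
    split; apply/negP => /(@notB _) H0; apply: H0.
      by left; rewrite mulr0n mul0r.
    by right; rewrite mulr1n mul1r.
  split => //; apply/negP => X0B.
  have XB := transl3 (k%:R * u) X0B.
  rewrite addr0 -succ in XB.
  have pq : k%:R * u != k.+1%:R * u.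
    rewrite succ; apply/negP => /eqP; rewrite -{1}[k%:R * u]addr0 => /addrI /eqP.
    by rewrite eq_sym (negbTE u0).
  have m1 : k%:R * u \in [set k%:R * u; k.+1%:R * u; k%:R * u + k.+2%:R * u] by rewrite !inE eqxx.
  have m2 : k.+1%:R * u \in [set k%:R * u; k.+1%:R * u; k%:R * u + k.+2%:R * u] by rewrite !inE eqxx orbT.
  have m3 : 0 \in [set 0; u; k.+2%:R * u] by rewrite !inE eqxx.
  have m4 : u \in [set 0; u; k.+2%:R * u] by rewrite !inE eqxx orbT.
  have u0' : 0 != u by rewrite eq_sym u0.
  have [z zZ W] := lemma1 XB X0B m1 m2 pq.
  move: zZ; rewrite !inE -orbA => /or3P [/eqP zz|/eqP zz|/eqP zz]; last first.
    move: W; rewrite zz; apply/negP.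
    have := H (k%:R * u); rewrite -succ.
    by rewrite -[k.+2]addn2 [in X in _ -> X]natrD [in X in _ -> X]mulrDl.
  1,2: have [z' z'W W'] := lemma1 X0B W m3 m4 u0'.
  1,2: move: z'W; rewrite !inE -orbA => /or3P [/eqP zz'|/eqP zz'|/eqP zz'];
    [by move: W'; rewrite zz' (negbTE IH1) | by move: W'; rewrite zz' (negbTE IH2) | move: W'; rewrite zz' zz => W'; apply: (notB _ W'); auto].
have /covP [X XB /andP[X0 Xu]] := par_free.
have [c Xe] := third XB X0 Xu ltac:(by rewrite eq_sym u0).
have [k _ ck] := every c.
by have [+ _] := P k; rewrite -ck -Xe XB.
Qed.

End Proof.

Theorem mainTheorem14 (n : nat) (Hn : (3 <= n)%N) (B : {set {set 'Z_n}})
  (HB : is_rank_matroid_bases 3 B) (Hinv : translation_invariant B)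
  (u : 'Z_n) (Hu : u \is a GRing.unit) :
  f_orbit u (2%:R * u) \subset B.
Proof.
apply/subsetP => S /imsetP [a _ ->]; case: (boolP (_ \in B)) => // Ha; exfalso.
apply: (main_core Hn HB Hinv Hu) => b; apply: contra Ha => Hb.
by have := transl3 Hinv (a - b) Hb; rewrite !addrA !subrK.
Qed.
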